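(* Let $n\ge2$ be even and $q>0$. Let $\omega=(nq,\ldots,nq,-nq,\ldots,-nq)\in\mathbb{R}^n$ (with $n/2$ entries equal to $nq$ followed by $n/2$ entries equal to $-nq$) and $k=(n,\ldots,n)$. Then, counting multiplicity, the number of equilibria $\theta\in(-\pi,\pi]^n$ satisfying $$\omega_\nu=\frac1n\sum_{\mu=1}^nk_\nu k_\mu\sin(\theta_\nu-\theta_\mu)\ (\nu=1,\ldots,n),\qquad \sum_{\mu=1}^nk_\mu e^{i\theta_\mu}\in\mathbb{R}_{\ge0},$$ is exactly $$2^n-\sum_{-q<\ell<q}\binom{n}{n/2+\ell},$$ the sum running over integers $\ell$. Hence the number of equilibria changes precisely at the integers $q=1,2,\ldots,n/2$.
   Context: Each such equilibrium corresponds to a sign pattern $\sigma\in\{-1,+1\}^n$ ($\sigma_\nu=\operatorname{sign}\cos\theta_\nu$) and a value $R=\left(\frac1n\sum_\mu k_\mu\cos\theta_\mu\right)^2>0$ that is a root of $f_\sigma(R)=-R+\frac1n\sum_{\mu=1}^n\sigma_\mu\sqrt{k_\mu^2R-\omega_\mu^2}$; ''counting multiplicity'' means the equilibrium is counted with the multiplicity of $R$ as a root of $f_\sigma$ (so an equilibrium coming from a double root is counted twice). *)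

(* Defs.v *)
From HB Require Import structures.
From mathcomp Require Import all_boot all_order all_algebra.
From mathcomp Require Import all_classical all_reals all_analysis.
Set Implicit Arguments. Unset Strict Implicit. Unset Printing Implicit Defensive.
Import Order.TTheory GRing.Theory Num.Theory.
Local Open Scope ring_scope.

Section KuramotoDefs.
Variables (R : realType) (n : nat).

(* theta is an equilibrium in (-pi,pi]^n for frequencies omega and couplings k:
   omega_nu = 1/n sum_mu k_nu k_mu sin(theta_nu - theta_mu), and
   sum_mu k_mu e^{i theta_mu} is a nonnegative real number, i.e. its
   imaginary part sum_mu k_mu sin theta_mu vanishes and its real part
   sum_mu k_mu cos theta_mu is >= 0. *)
Definition is_equilibrium (omega k theta : 'I_n -> R) : Prop :=
  [/\ (forall nu, - pi < theta nu <= pi),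
      (forall nu, omega nu =
          n%:R^-1 * \sum_(mu < n) k nu * k mu * sin (theta nu - theta mu)),
      \sum_(mu < n) k mu * sin (theta mu) = 0 &
      0 <= \sum_(mu < n) k mu * cos (theta mu)].

Definition sign_pattern (theta : 'I_n -> R) : 'I_n -> R :=
  fun nu => if cos (theta nu) < 0 then -1 else 1.

Definition Rval (k theta : 'I_n -> R) : R :=
  (n%:R^-1 * \sum_(mu < n) k mu * cos (theta mu)) ^+ 2.

Definition fsigma (omega k sigma : 'I_n -> R) (x : R) : R :=
  - x + n%:R^-1 * \sum_(mu < n) sigma mu * Num.sqrt (k mu ^+ 2 * x - omega mu ^+ 2).

End KuramotoDefs.

Definition root_mult (R : realType) (f : R -> R) (x : R) (m : nat) : Prop :=
  (forall j, (j < m)%N -> derive1n j f x = 0) /\ derive1n m f x <> 0.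

Definition binomz (n : nat) (j : int) : nat :=
  match j with Posz m => 'C(n, m) | Negz _ => 0%N end.

Definition omega_ex (R : realType) (n : nat) (q : R) : 'I_n -> R :=
  fun nu => if (nu < n./2)%N then n%:R * q else - (n%:R * q).
Definition k_ex (R : realType) (n : nat) : 'I_n -> R := fun _ => n%:R.

(* Main.v *)
Require Import Defs.
From HB Require Import structures.
From mathcomp Require Import all_boot all_order all_algebra.
From mathcomp Require Import all_classical all_reals all_analysis.
From mathcomp Require Import ring lra.
Import Order.TTheory GRing.Theory Num.Theory.
Local Open Scope ring_scope.

Section Alg.
Variable R : realType.

Definition ang (a b : R) : R := if 0 <= a then acos b else - acos b.

Lemma ang_spec (a b : R) : a ^+ 2 + b ^+ 2 = 1 -> a != 0 ->
  [/\ sin (ang a b) = a, cos (ang a b) = b & - pi < ang a b <= pi].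
Proof.
move=> ab a0.
have b1 : -1 <= b <= 1.
  by apply/andP; split; nra.
have bm1 : -1 < b by rewrite lt_neqAle (andP b1).1 andbT; apply/eqP => bE; move: ab; rewrite -bE; move/eqP: a0; nra.
have sa : sin (acos b) = `|a|.
  by rewrite sin_acos // -ab addrK sqrtr_sqr.
have ca : cos (acos b) = b by rewrite acosK // in_itv /=.
have a1 : 0 <= acos b by apply: acos_ge0.
have a2 : acos b < pi by apply: acos_ltpi; rewrite bm1 (andP b1).2.
have pi0 : 0 < pi :> R by exact: pi_gt0.
rewrite /ang; case: ifP => ha.
  by rewrite sa ger0_norm // ca; split => //; apply/andP; split; lra.
rewrite sinN cosN sa ltr0_norm ?opprK ?ca; last by rewrite ltNge ha.
by split => //; apply/andP; split; lra.
Qed.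

Lemma ang_uniq (t : R) : - pi < t <= pi -> ang (sin t) (cos t) = t.
Proof.
move=> /andP [t1 t2].
have pi0 : 0 < pi :> R by exact: pi_gt0.
rewrite /ang; case: ifP => hs.
  have t0 : 0 <= t.
    rewrite leNgt; apply/negP => tn.
    have : 0 < sin (- t) by apply: sin_gt0_pi; apply/andP; split; lra.
    by rewrite sinN; lra.
  by rewrite cosK // in_itv /= t0 t2.
have t0 : t <= 0.
  rewrite leNgt; apply/negP => tp.
  have : 0 <= sin t by apply: sin_ge0_pi; apply/andP; split; lra.
  by rewrite hs.
by rewrite cosKN ?opprK //; apply/andP; split; lra.
Qed.

End Alg.
Arguments ang {R}.
Arguments ang_spec {R}.
Arguments ang_uniq {R}.

Section An.
Variable R : realType.

Lemma is_derive_sqrtB {c x : R} : c < x ->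
  is_derive x 1 (fun y => Num.sqrt (y - c)) (2 * Num.sqrt (x - c))^-1.
Proof.
move=> cx.
have h1 : is_derive x (1:R) (fun y : R => y - c) 1.
  have := @is_deriveB _ _ _ id (cst c) x 1 1 0 (is_derive_id _ _) (is_derive_cst _ _ _).
  by rewrite subr0.
have h0 : 0 < x - c by rewrite subr_gt0.
have := @is_derive1_comp R Num.sqrt (fun y => y - c) x _ 1 (is_derive1_sqrt h0) h1.
by rewrite mulr1.
Qed.

Definition Fs (c s : R) := fun y : R => - y + s * Num.sqrt (y - c).
Definition Gs (c s : R) := fun y : R => -1 + s * (2 * Num.sqrt (y - c))^-1.

Lemma is_derive_Fs {c s x : R} : c < x ->
  is_derive x 1 (Fs c s) (Gs c s x).
Proof.
move=> cx; rewrite /Fs /Gs.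
have := @is_deriveD _ _ _ -%R (s \*: (fun y => Num.sqrt (y - c))) x 1 _ _
  (is_deriveNid x 1) (is_deriveZ s (is_derive_sqrtB cx)).
by [].
Qed.

Lemma derive1_Fs {c s x : R} : c < x -> derive1 (Fs c s) x = Gs c s x.
Proof. by move=> cx; rewrite derive1E; apply: derive_val; exact: is_derive_Fs. Qed.

Lemma is_derive_Gs {c s x : R} : c < x ->
  is_derive x 1 (Gs c s) (s * (- (2 * Num.sqrt (x - c)) ^- 2 * (2 * (2 * Num.sqrt (x - c))^-1))).
Proof.
move=> cx; rewrite /Gs.
have h2 : is_derive x (1:R) (fun y => 2 * Num.sqrt (y - c)) (2 * (2 * Num.sqrt (x - c))^-1).
  exact: (is_deriveZ 2 (is_derive_sqrtB cx)).
have hV := is_deriveV _ h2.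
have hn : 2 * Num.sqrt (x - c) != 0 by rewrite mulf_neq0 // gt_eqF // sqrtr_gt0 subr_gt0.
have := is_deriveD (is_derive_cst (-1:R) x 1) (is_deriveZ s (hV hn)).
by rewrite add0r.
Qed.

Lemma derive2_Fs (c s x : R) : c < x -> derive1 (derive1 (Fs c s)) x =
   s * (- (2 * Num.sqrt (x - c)) ^- 2 * (2 * (2 * Num.sqrt (x - c))^-1)).
Proof.
move=> cx; rewrite derive1E.
rewrite (@near_eq_derive _ _ _ _ (Gs c s)); last first.
  near=> y; apply: derive1_Fs; near: y; exact: lt_nbhsr.
by apply: derive_val; exact: is_derive_Gs.
Unshelve. all: by end_near. Qed.


Lemma root_lemma (q s X : R) : 0 < q -> 0 < s -> q ^+ 2 < X ->
  X = s * Num.sqrt (X - q ^+ 2) ->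
  root_mult (Fs (q ^+ 2) s) X (if 2 * q == s then 2%N else 1%N).
Proof.
move=> q0 s0 qX hX.
have cx : q ^+ 2 < X by [].
set D := Num.sqrt (X - q ^+ 2) in hX.
have D0 : 0 < D by rewrite sqrtr_gt0 subr_gt0.
have D2 : D ^+ 2 = X - q ^+ 2 by rewrite sqr_sqrtr // subr_ge0 ltW.
have F0 : Fs (q ^+ 2) s X = 0 by rewrite /Fs -/D -hX addNr.
have G1 := derive1_Fs cx.
have G2 := @derive2_Fs _ s _ cx.
rewrite -/D in G1 G2.
case: eqP => [e2|ne2].
- have Dq : D = q by nra.
  split.
    move=> j; case: j => [_|[_|//]] /=; first exact: F0.
    rewrite G1 /Gs -/D Dq -e2 mulrC mulVf ?addNr //; lra.
  rewrite /= G2 => /eqP; rewrite !mulf_eq0 oppr_eq0 invr_eq0 expf_eq0 /= !mulf_eq0.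
  rewrite !invr_eq0 !mulf_eq0 /=; apply/negP.
  have two0 : (2:R) != 0 by rewrite pnatr_eq0.
  by rewrite (gt_eqF s0) (gt_eqF D0) (negbTE two0).
- split.
    by move=> j; case: j => [_|//] /=; exact: F0.
  rewrite /= G1 /Gs -/D => G0.
  apply: ne2.
  have : s * (2 * D)^-1 = 1 by lra.
  move/(congr1 (fun z => z * (2 * D))); rewrite mul1r -mulrA mulVf ?mulr1; last first.
    by rewrite mulf_neq0 // gt_eqF.
  move=> sD; nra.
Qed.
End An.
Arguments Fs {R}.
Arguments Gs {R}.
Arguments root_lemma {R}.

Section Main.
Variables (R : realType) (n : nat) (q : R).
Hypotheses (n2 : (2 <= n)%N) (nev : ~~ odd n) (q0 : 0 < q).

Definition hh := n./2.
Lemma nE : n = (hh + hh)%N.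
Proof. by rewrite addnn /hh -[in LHS](odd_double_half n) (negbTE nev). Qed.

Definition eps (nu : 'I_n) : R := if (nu < hh)%N then 1 else -1.
Definition sg (A : {set 'I_n}) (nu : 'I_n) : R := if nu \in A then -1 else 1.
Definition sA (A : {set 'I_n}) : R := \sum_nu sg A nu.

Lemma sum_eps : \sum_nu eps nu = 0.
Proof.
rewrite /eps -(big_mkord xpredT (fun i => if (i < hh)%N then (1:R) else -1)).
rewrite (big_cat_nat _ (n := hh)) //=; last by rewrite nE leq_addr.
rewrite (eq_big_nat _ _ (F2 := fun=> 1)); last by move=> i /andP[_ ->].
rewrite [X in _ + X](eq_big_nat _ _ (F2 := fun=> -1)); last first.
  by move=> i /andP[hi _]; rewrite ltnNge hi.
rewrite !sumr_const_nat {1}nE addnK subn0.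
by rewrite mulNrn subrr.
Qed.

Lemma sA_E A : sA A = n%:R - 2 * #|A|%:R.
Proof.
rewrite /sA (bigID (fun nu => nu \in A)) /=.
rewrite (eq_bigr (fun=> -1)); last by move=> i; rewrite /sg => ->.
rewrite [X in _ + X](eq_bigr (fun=> 1)); last by move=> i /negbTE; rewrite /sg => ->.
rewrite !sumr_const.
have e : (#|A| + #|(fun i : 'I_n => i \notin A)|)%N = n.
  by have := cardC A; rewrite card_ord.
have -> : (n%:R : R) = (#|A| + #|(fun i : 'I_n => i \notin A)|)%N%:R by rewrite e.
rewrite natrD mulNrn; lra.
Qed.


Definition tA A := Num.sqrt (sA A ^+ 2 - 4 * q ^+ 2).
Definition XA A (b : bool) := (sA A ^+ 2 + (if b then 1 else -1) * (sA A * tA A)) / 2.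
Definition CA A b := Num.sqrt (XA A b).
Definition rr (C : R) := Num.sqrt (1 - q ^+ 2 / C ^+ 2).

Lemma roots_spec A b : 2 * q <= sA A ->
  [/\ 0 < sA A, q < CA A b, 0 < rr (CA A b) & rr (CA A b) * sA A = CA A b].
Proof.
move=> hs.
set s := sA A in hs *.
have qq := q0.
have s0 : 0 < s by lra.
have d0 : 0 <= s ^+ 2 - 4 * q ^+ 2 by nra.
have ht : tA A ^+ 2 = s ^+ 2 - 4 * q ^+ 2 by rewrite sqr_sqrtr.
have t0 : 0 <= tA A by apply: sqrtr_ge0.
set t := tA A in ht t0.
have q2 : 0 < q ^+ 2 by rewrite exprn_gt0.
have ts : t < s by rewrite ltNge; apply/negP => st; nra.
have hX : q ^+ 2 < XA A b.
  rewrite /XA -/s -/t; have : q^+2 < (s^+2 - s * t)/2 by nra.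
  by case: b; nra.
set e : R := if b then 1 else -1.
have e2 : e ^+ 2 = 1 by rewrite /e; case: (b); rewrite ?expr1n ?sqrrN ?expr1n.
have eX : XA A b = (s ^+ 2 + e * (s * t)) / 2 by [].
have X0 : 0 <= XA A b by nra.
have hC : CA A b ^+ 2 = XA A b by rewrite sqr_sqrtr.
have C0 : 0 <= CA A b by apply: sqrtr_ge0.
have qC : q < CA A b by nra.
have Cn0 : CA A b ^+ 2 != 0 by rewrite hC; apply/eqP; nra.
have hq1 : q ^+ 2 / CA A b ^+ 2 < 1.
  by rewrite ltr_pdivrMr ?mul1r; nra.
have r2 : rr (CA A b) ^+ 2 = 1 - q ^+ 2 / CA A b ^+ 2 by rewrite sqr_sqrtr //; lra.
have r0 : 0 < rr (CA A b) by rewrite sqrtr_gt0; lra.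
split => //.
apply/eqP; rewrite -(@eqrXn2 _ 2) //; last by nra.
have quad : XA A b ^+ 2 - s ^+ 2 * XA A b + q ^+ 2 * s ^+ 2 = 0.
  rewrite eX.
  have -> : ((s ^+ 2 + e * (s * t)) / 2) ^+ 2 - s ^+ 2 * ((s ^+ 2 + e * (s * t)) / 2) + q ^+ 2 * s ^+ 2
     = (e^+2 * s^+2 * t^+2 - s^+4 + 4 * q^+2 * s^+2) / 4 by field.
  rewrite e2 ht; apply/eqP; rewrite mulf_eq0; apply/orP; left; apply/eqP; ring.
rewrite exprMn r2 hC.
apply/eqP; rewrite hC in Cn0 *.
move: Cn0 quad; set X := XA A b => Xn0 quad.
apply: (@mulfI _ X) => //.
have -> : X * ((1 - q ^+ 2 / X) * s ^+ 2) = X * s^+2 - q^+2 * s^+2 by field.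
by nra.
Qed.


Definition theta A b : {ffun 'I_n -> R} :=
  [ffun nu => ang (eps nu * q / CA A b) (sg A nu * rr (CA A b))].

Lemma eps2 nu : eps nu ^+ 2 = 1.
Proof. by rewrite /eps; case: ifP; rewrite ?sqrrN expr1n. Qed.
Lemma sg2 A nu : sg A nu ^+ 2 = 1.
Proof. by rewrite /sg; case: ifP; rewrite ?sqrrN expr1n. Qed.
Lemma eps_neq0 nu : eps nu != 0.
Proof. by rewrite /eps; case: ifP; rewrite ?oppr_eq0 oner_eq0. Qed.

Lemma theta_sc A b nu : 2 * q <= sA A ->
  [/\ sin (theta A b nu) = eps nu * q / CA A b,
      cos (theta A b nu) = sg A nu * rr (CA A b) &
      - pi < theta A b nu <= pi].
Proof.
move=> hs; have qq := q0.
have [s0 qC r0 rs] := roots_spec A b hs.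
have C0 : CA A b != 0 by apply/eqP => C0; rewrite C0 in qC; lra.
have hq1 : q ^+ 2 / CA A b ^+ 2 <= 1.
  rewrite ler_pdivrMr ?mul1r; last by rewrite exprn_gt0 //; lra.
  by nra.
have r2 : rr (CA A b) ^+ 2 = 1 - q ^+ 2 / CA A b ^+ 2 by rewrite sqr_sqrtr //; lra.
rewrite ffunE; apply: ang_spec.
  rewrite !exprMn sg2 r2 eps2 mul1r exprVn; lra.
by rewrite !mulf_neq0 ?eps_neq0 ?invr_eq0 // gt_eqF.
Qed.

Lemma equil_iff (th : 'I_n -> R) :
  is_equilibrium (@omega_ex R n q) (@k_ex R n) th <->
  [/\ (forall nu, - pi < th nu <= pi),
      (forall nu, eps nu * q = sin (th nu) * \sum_mu cos (th mu) - cos (th nu) * \sum_mu sin (th mu)),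
      \sum_mu sin (th mu) = 0 &
      0 <= \sum_mu cos (th mu)].
Proof.
have n0 : (n%:R : R) != 0 by rewrite pnatr_eq0 -lt0n; apply: leq_trans n2.
have n0' : (0 : R) < n%:R by rewrite ltr0n; apply: leq_trans n2.
have E1 nu : n%:R^-1 * \sum_(mu < n) @k_ex R n nu * @k_ex R n mu * sin (th nu - th mu)
   = n%:R * (sin (th nu) * \sum_mu cos (th mu) - cos (th nu) * \sum_mu sin (th mu)).
  rewrite !mulr_sumr -sumrB mulr_sumr; apply: eq_bigr => mu _.
  by rewrite /k_ex sinB; field.
have E2 : \sum_(mu < n) @k_ex R n mu * sin (th mu) = n%:R * \sum_mu sin (th mu).
  by rewrite mulr_sumr.
have E3 : \sum_(mu < n) @k_ex R n mu * cos (th mu) = n%:R * \sum_mu cos (th mu).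
  by rewrite mulr_sumr.
have Eo x : @omega_ex R n q x = n%:R * (eps x * q).
  by rewrite /omega_ex /eps /hh; case: ifP => _; ring.
rewrite /is_equilibrium E2 E3.
split => -[h1 h2 h3 h4]; split => //.
- move=> nu0; apply: (mulfI n0); rewrite -Eo h2 E1 //.
- by move/eqP: h3; rewrite mulf_eq0 (negbTE n0) /= => /eqP.
- by rewrite pmulr_rge0 in h4.
- by move=> nu0; rewrite Eo E1 h2.
- by rewrite h3 mulr0.
- by rewrite mulr_ge0 // ltW.
Qed.

Lemma theta_equil A b : 2 * q <= sA A ->
  is_equilibrium (@omega_ex R n q) (@k_ex R n) (theta A b).
Proof.
move=> hs; have qq := q0.
have [s0 qC r0 rs] := roots_spec A b hs.
have C0 : CA A b != 0 by apply/eqP => C0; rewrite C0 in qC; lra.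
have Ss : \sum_mu sin (theta A b mu) = 0.
  rewrite (eq_bigr (fun mu => eps mu * (q / CA A b))); last first.
    by move=> mu _; have [-> _ _] := theta_sc A b mu hs; rewrite mulrA.
  by rewrite -mulr_suml sum_eps mul0r.
have Cc : \sum_mu cos (theta A b mu) = CA A b.
  rewrite (eq_bigr (fun mu => sg A mu * rr (CA A b))); last first.
    by move=> mu _; have [_ -> _] := theta_sc A b mu hs.
  by rewrite -mulr_suml -/(sA A) mulrC rs.
apply/equil_iff; split.
- by move=> nu; have [_ _ ->] := theta_sc A b nu hs.
- move=> nu; rewrite Ss Cc mulr0 subr0; have [-> _ _] := theta_sc A b nu hs.
  by rewrite divfK.
- exact: Ss.
- by rewrite Cc; lra.
Qed.


Lemma theta_CS A b : 2 * q <= sA A ->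
  \sum_mu sin (theta A b mu) = 0 /\ \sum_mu cos (theta A b mu) = CA A b.
Proof.
move=> hs; have qq := q0.
have [s0 qC r0 rs] := roots_spec A b hs.
split.
  rewrite (eq_bigr (fun mu => eps mu * (q / CA A b))); last first.
    by move=> mu _; have [-> _ _] := theta_sc A b mu hs; rewrite mulrA.
  by rewrite -mulr_suml sum_eps mul0r.
rewrite (eq_bigr (fun mu => sg A mu * rr (CA A b))); last first.
  by move=> mu _; have [_ -> _] := theta_sc A b mu hs.
by rewrite -mulr_suml -/(sA A) mulrC rs.
Qed.

Lemma theta_sign A b : 2 * q <= sA A -> sign_pattern (theta A b) = sg A.
Proof.
move=> hs; have [s0 qC r0 rs] := roots_spec A b hs.
apply/funext => nu; rewrite /sign_pattern.
have [_ -> _] := theta_sc A b nu hs.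
have qq := q0.
rewrite /sg; case: (nu \in A).
  by have -> : -1 * rr (CA A b) < 0 by lra.
by have -> : (1 * rr (CA A b) < 0) = false by apply/negbTE; rewrite -leNgt; lra.
Qed.

Lemma XA_pos A b : 2 * q <= sA A -> CA A b ^+ 2 = XA A b /\ q ^+ 2 < XA A b.
Proof.
move=> hs; have qq := q0; have [s0 qC r0 rs] := roots_spec A b hs.
have C0 : 0 < CA A b by lra.
have X0 : 0 < XA A b by rewrite -sqrtr_gt0.
have E : CA A b ^+ 2 = XA A b by rewrite sqr_sqrtr // ltW.
by split => //; rewrite -E; nra.
Qed.

Lemma theta_Rval A b : 2 * q <= sA A -> Rval (@k_ex R n) (theta A b) = XA A b.
Proof.
move=> hs; have [_ hC] := theta_CS A b hs.
have n0 : (n%:R : R) != 0 by rewrite pnatr_eq0 -lt0n; apply: leq_trans n2.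
rewrite /Rval /k_ex -mulr_sumr hC mulKf //.
by have [] := XA_pos A b hs.
Qed.

Lemma fsigma_E (sig : 'I_n -> R) :
  fsigma (@omega_ex R n q) (@k_ex R n) sig = Fs (q ^+ 2) (\sum_mu sig mu).
Proof.
have n0 : (n%:R : R) != 0 by rewrite pnatr_eq0 -lt0n; apply: leq_trans n2.
have n0' : (0 : R) <= n%:R by [].
apply/funext => x; rewrite /fsigma /Fs; congr (_ + _).
rewrite mulr_suml mulr_sumr; apply: eq_bigr => mu _.
have -> : @k_ex R n mu ^+ 2 * x - @omega_ex R n q mu ^+ 2 = n%:R ^+ 2 * (x - q ^+ 2).
  rewrite /k_ex /omega_ex; case: ifP => _; rewrite ?sqrrN; ring.
rewrite sqrtrM ?sqr_ge0 // sqrtr_sqr ger0_norm //.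
by field.
Qed.


Definition mult A : nat := if 2 * q == sA A then 2%N else 1%N.

Lemma theta_root A b : 2 * q <= sA A ->
  root_mult (fsigma (@omega_ex R n q) (@k_ex R n) (sign_pattern (theta A b)))
            (Rval (@k_ex R n) (theta A b)) (mult A).
Proof.
move=> hs; have qq := q0.
have [s0 qC r0 rs] := roots_spec A b hs.
have [hC hX] := XA_pos A b hs.
rewrite theta_sign // fsigma_E -/(sA A) theta_Rval //.
apply: root_lemma => //.
have C0 : CA A b != 0 by apply/eqP => C0; rewrite C0 in qC; lra.
have hq1 : q ^+ 2 / CA A b ^+ 2 <= 1.
  rewrite ler_pdivrMr ?mul1r; last by rewrite exprn_gt0 //; lra.
  by nra.
have r2 : rr (CA A b) ^+ 2 = 1 - q ^+ 2 / CA A b ^+ 2 by rewrite sqr_sqrtr //; lra.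
have -> : XA A b - q ^+ 2 = (CA A b * rr (CA A b)) ^+ 2.
  by rewrite exprMn r2 -hC; field.
rewrite sqrtr_sqr ger0_norm; last by apply: mulr_ge0; lra.
rewrite -hC (_ : sA A * (CA A b * rr (CA A b)) = CA A b * (rr (CA A b) * sA A)); last by ring.
by rewrite rs expr2.
Qed.


Definition valid (x : {set 'I_n} * bool) : bool :=
  (2 * q < sA x.1) || ((2 * q == sA x.1) && x.2).

Lemma valid_le x : valid x -> 2 * q <= sA x.1.
Proof. by case/orP => [/ltW //|/andP[/eqP -> _]]. Qed.

Lemma classify (th : {ffun 'I_n -> R}) :
  is_equilibrium (@omega_ex R n q) (@k_ex R n) th ->
  exists x, valid x /\ th = theta x.1 x.2.
Proof.
have qq := q0.
move/equil_iff => [hr he hS hC].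
set Cc := \sum_mu cos (th mu) in he hC.
have n0 : (0 < n)%N by apply: leq_trans n2.
set nu0 : 'I_n := Ordinal n0.
have hsin nu : Cc != 0 /\ sin (th nu) = eps nu * q / Cc.
  have := he nu; rewrite hS mulr0 subr0 => e.
  have Cn0 : Cc != 0.
    apply/eqP => C0; move: e; rewrite C0 mulr0 => /eqP.
    by rewrite mulf_eq0 (negbTE (eps_neq0 nu)) /= gt_eqF.
  by split => //; rewrite e mulfK.
have [Cn0 _] := hsin nu0.
have Cp : 0 < Cc by rewrite lt_neqAle eq_sym Cn0 hC.
set A := [set nu | cos (th nu) < 0].
have hq1 : q ^+ 2 / Cc ^+ 2 <= 1.
  have := cos2Dsin2 (th nu0); have [_ ->] := hsin nu0.
  rewrite !exprMn eps2 mul1r exprVn => E.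
  have := sqr_ge0 (cos (th nu0)); lra.
set r := rr Cc.
have r0 : 0 <= r by apply: sqrtr_ge0.
have r2 : r ^+ 2 = 1 - q ^+ 2 / Cc ^+ 2 by rewrite sqr_sqrtr //; lra.
have hcos nu : cos (th nu) = sg A nu * r.
  have c2 : cos (th nu) ^+ 2 = r ^+ 2.
    rewrite cos2sin2 r2; have [_ ->] := hsin nu.
    by rewrite !exprMn eps2 mul1r exprVn.
  have : `|cos (th nu)| = r by rewrite -(ger0_norm r0) -!sqrtr_sqr c2.
  rewrite /sg inE; case: ltP => hc.
    by rewrite ltr0_norm // => <-; rewrite mulN1r opprK.
  by rewrite ger0_norm // => <-; rewrite mul1r.
have CE : Cc = sA A * r.
  by rewrite /Cc (eq_bigr _ (fun nu _ => hcos nu)) -mulr_suml.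
set s := sA A in CE.
have s0 : 0 < s by nra.
set X := Cc ^+ 2.
have Xn0 : X != 0 by rewrite expf_neq0.
have quad : X ^+ 2 - s ^+ 2 * X + q ^+ 2 * s ^+ 2 = 0.
  have : X = s ^+ 2 * (1 - q ^+ 2 / X) by rewrite -r2 -exprMn -CE.
  move=> e; have e' : X * X = s ^+ 2 * X - q ^+ 2 * s ^+ 2.
    by rewrite {1}e; field.
  rewrite expr2; lra.
have d0 : 0 <= s ^+ 2 - 4 * q ^+ 2.
  have : (2 * X - s ^+ 2) ^+ 2 = s ^+ 2 * (s ^+ 2 - 4 * q ^+ 2).
    by nra.
  move=> e; have := sqr_ge0 (2 * X - s ^+ 2); rewrite e.
  by rewrite pmulr_rge0 // exprn_gt0.
have hs : 2 * q <= s by nra.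
have ht : tA A ^+ 2 = s ^+ 2 - 4 * q ^+ 2 by rewrite sqr_sqrtr.
have t0 : 0 <= tA A by apply: sqrtr_ge0.
have eabs : `|2 * X - s ^+ 2| = s * tA A.
  have : (2 * X - s ^+ 2) ^+ 2 = (s * tA A) ^+ 2.
    by rewrite exprMn ht; nra.
  move=> e; rewrite -(ger0_norm (_ : 0 <= s * tA A)); last by apply: mulr_ge0 => //; lra.
  by rewrite -!sqrtr_sqr e.
set b := (0 <= 2 * X - s ^+ 2).
have hXA : XA A b = X.
  rewrite /XA -/s /b; case: lerP eabs => h.
    by rewrite ger0_norm // => e; rewrite mul1r -e; field.
  by rewrite ltr0_norm // => e; rewrite mulN1r -e; field.
have hCA : CA A b = Cc by rewrite /CA hXA /X sqrtr_sqr gtr0_norm.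
exists (A, b); split.
  rewrite /valid /= -/s; case: ltP => //= h; have e : s = 2 * q by lra.
  rewrite e eqxx /= /b.
  have : tA A = 0 by rewrite /tA -/s e; rewrite -[X in Num.sqrt X]/(_) ; apply/eqP; rewrite sqrtr_eq0; nra.
  by move=> t00; move: eabs; rewrite t00 mulr0 => /eqP; rewrite normr_eq0 => /eqP ->.
apply/ffunP => nu; rewrite ffunE /= hCA -(ang_uniq _ (hr nu)).
by have [_ <-] := hsin nu; rewrite -hcos.
Qed.


Lemma theta_inj x y : valid x -> valid y -> theta x.1 x.2 = theta y.1 y.2 -> x = y.
Proof.
have qq := q0.
case: x => A b; case: y => A' b' vx vy /= H.
have hs := valid_le _ vx; have hs' := valid_le _ vy; rewrite /= in hs hs'.
have AA : A = A'.
  have := theta_sign A b hs; rewrite H theta_sign // => e.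
  apply/setP => nu; have := congr1 (fun f => f nu) e; rewrite /sg.
  by case: (nu \in A); case: (nu \in A') => // /eqP; rewrite -subr_eq0 ?opprK;
    rewrite ?(_ : (-1 : R) - -1 = 0) ?subrr //; lra.
subst A'.
have n0 : (0 < n)%N by apply: leq_trans n2.
set nu0 : 'I_n := Ordinal n0.
have CC : CA A b = CA A b'.
  have := congr1 (fun f : {ffun 'I_n -> R} => sin (f nu0)) H => /=.
  have [-> _ _] := theta_sc A b nu0 hs; have [-> _ _] := theta_sc A b' nu0 hs'.
  have e0 : eps nu0 * q != 0 by rewrite mulf_neq0 ?eps_neq0 // gt_eqF.
  by move/(mulfI e0)/invr_inj.
have XX : XA A b = XA A b'.
  by have [<- _] := XA_pos A b hs; have [<- _] := XA_pos A b' hs'; rewrite CC.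
congr (_, _).
have [s0 _ _ _] := roots_spec A b hs.
case: b b' vx vy XX {H CC} => -[] //= vx vy; rewrite /XA => XX;
  have st : sA A * tA A = 0 by lra.
all: have t00 : tA A = 0 by move/eqP: st; rewrite mulf_eq0 gt_eqF //= => /eqP.
all: have ht : tA A ^+ 2 = sA A ^+ 2 - 4 * q ^+ 2 by rewrite sqr_sqrtr //; nra.
all: have e : sA A = 2 * q by rewrite t00 in ht; nra.
all: by move: vx vy; rewrite /valid /= e ltxx eqxx.
Qed.


Definition eqseq : seq ({ffun 'I_n -> R} * nat) :=
  [seq (theta x.1 x.2, mult x.1) | x <- enum [pred x : {set 'I_n} * bool | valid x]].

Definition FF (m : nat) : nat := if 2 * q <= n%:R - 2 * m%:R then 2%N else 0%N.

Lemma count1 : (\sum_(p <- eqseq) p.2 = \sum_(A : {set 'I_n}) FF #|A|)%N.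
Proof.
have qq := q0.
rewrite big_map big_enum /=.
rewrite (eq_bigl (fun x => xpredT x.1 && valid (x.1, x.2))); last by case.
rewrite -(pair_big_dep xpredT (fun A b => valid (A, b)) (fun A b => mult A)) /=.
apply: eq_bigr => A _.
rewrite big_mkcond big_bool /= /valid /= /mult /FF -sA_E.
by case: ltgtP.
Qed.

Lemma count2 : (\sum_(A : {set 'I_n}) FF #|A| = \sum_(m < n.+1) 'C(n, m) * FF m)%N.
Proof.
rewrite (partition_big (fun A : {set 'I_n} => (inord #|A| : 'I_n.+1)) xpredT) //=.
apply: eq_bigr => m _.
rewrite (eq_bigl (fun A : {set 'I_n} => A \in [set A : {set 'I_n} | #|A| == m])); last first.
  move=> A; rewrite inE /=.
  have hA : (#|A| < n.+1)%N by rewrite ltnS -[X in (_ <= X)%N](card_ord n) -cardsT; apply: subset_leq_card; apply: finset.subsetT.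
  by rewrite -(inj_eq val_inj) /= inordK.
rewrite (eq_bigr (fun=> FF m)); last by move=> A; rewrite inE => /eqP ->.
by rewrite sum_nat_const card_draws card_ord mulnC.
Qed.


Definition Cond (m : nat) : bool := (- q < m%:R - hh%:R) && (m%:R - hh%:R < q).

Lemma count3 :
  (\sum_(i < (2 * n).+1 |
       (- q < ((i%:Z - n%:Z)%:~R : R)) && (((i%:Z - n%:Z)%:~R : R) < q))
       (binomz n ((n./2)%:Z + (i%:Z - n%:Z)))%:Z =
   \sum_(m < n.+1) (if Cond m then ('C(n, m))%:Z else 0))%R.
Proof.
rewrite big_mkcond /=.
rewrite -(big_mkord xpredT (fun i => if (- q < ((i%:Z - n%:Z)%:~R : R)) && (((i%:Z - n%:Z)%:~R : R) < q)
     then (binomz n ((n./2)%:Z + (i%:Z - n%:Z)))%:Z else 0)).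
have hn : (hh <= n)%N by rewrite nE leq_addr.
rewrite (@big_cat_nat _ _ _ hh) //=; last by apply: leq_trans hn _; rewrite leqW // leq_pmull.
rewrite [X in X + _]big_nat_cond big1 ?add0r; last first.
  move=> i /andP[/andP[_ ih] _]; case: ifP => // _.
  have -> : ((n./2)%:Z + (i%:Z - n%:Z)) = Negz (hh - i).-1.
    rewrite -/hh NegzE prednK ?subn_gt0 // nE.
    rewrite PoszD -(subzn (ltnW ih)); ring.
  by [].
rewrite (@big_cat_nat _ _ _ (hh + n.+1)) //=; last first.
  by rewrite nE addnS ltnS mul2n -addnn leq_add2r leq_addr.
  by rewrite leq_addr.
rewrite [X in _ + X]big_nat_cond [X in _ + X]big1 ?addr0; last first.
  move=> i /andP[/andP[hi _] _]; case: ifP => // _.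
  have -> : ((n./2)%:Z + (i%:Z - n%:Z)) = Posz (i - hh).
    have hi2 : (hh <= i)%N by apply: leq_trans hi; apply: leq_addr.
    rewrite -/hh -(subzn hi2) nE PoszD; ring.
  rewrite /= bin_small //.
  by rewrite ltn_subRL -addnS.
rewrite -{1}(add0n hh) big_addn addKn big_mkord.
apply: eq_bigr => i _.
have e1 : ((i + hh)%N%:Z - n%:Z) = i%:Z - hh%:Z.
  by move: (nat_of_ord i) => j; rewrite nE !PoszD; ring.
rewrite e1 intrB /Cond /=; case: ifP => // _.
have -> : ((n./2)%:Z + (i%:Z - hh%:Z)) = Posz i by rewrite -/hh; ring.
by [].
Qed.


Lemma count4 :
  ((\sum_(m < n.+1) 'C(n, m) * FF m)%N%:Z =
   (2 ^ n)%:Z - \sum_(m < n.+1) (if Cond m then ('C(n, m))%:Z else 0))%R.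
Proof.
have qq := q0.
have nh : (n%:R : R) = 2 * hh%:R by rewrite {1}nE natrD; ring.
set c1 := fun m : nat => 2 * q <= n%:R - 2 * (m%:R : R).
set c3 := fun m : nat => 2 * q <= 2 * (m%:R : R) - n%:R.
have rev : (\sum_(m < n.+1) (if c3 m then ('C(n, m))%:Z else 0) =
            \sum_(m < n.+1) (if c1 m then ('C(n, m))%:Z else 0))%R.
  rewrite (reindex_inj rev_ord_inj) /=; apply: eq_bigr => j _.
  have jn : (j <= n)%N by rewrite -ltnS.
  rewrite subSS bin_sub // /c1 /c3 natrB //.
  by congr (if _ then _ else _); apply/idP/idP => h; lra.
have split3 (m : nat) : (('C(n, m))%:Z = (if c1 m then ('C(n, m))%:Z else 0) +
     (if Cond m then ('C(n, m))%:Z else 0) + (if c3 m then ('C(n, m))%:Z else 0))%R.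
  rewrite /c1 /c3 /Cond nh.
  case: (lerP (2 * q) (2 * hh%:R - 2 * m%:R)) => h1;
  case: (lerP (2 * q) (2 * m%:R - 2 * hh%:R)) => h3;
  case: (ltrP (- q) (m%:R - hh%:R)) => h4 /=;
  case: (ltrP (m%:R - hh%:R) q) => h5 /=; rewrite ?addr0 ?add0r //; exfalso; lra.
have -> : Posz (expn 2 n) = (\sum_(m < n.+1) ('C(n, m))%:Z)%R.
  have := expnDn 1 1 n; rewrite addn1 => ->.
  rewrite -natz natr_sum; apply: eq_bigr => m _.
  by rewrite !exp1n !muln1 natz.
rewrite (eq_bigr _ (fun (m : 'I_n.+1) _ => split3 m)) !big_split /= rev.
have -> : Posz (\sum_(m < n.+1) 'C(n, m) * FF m)%N =
   (\sum_(m < n.+1) (if c1 m then ('C(n, m))%:Z else 0) +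
    \sum_(m < n.+1) (if c1 m then ('C(n, m))%:Z else 0))%R.
  rewrite -big_split -natz natr_sum; apply: eq_bigr => m _.
  rewrite /FF /c1 natz; case: ifP => _ //=; rewrite ?muln0 // PoszM; ring.
ring.
Qed.


Lemma main :
  exists s : seq ({ffun 'I_n -> R} * nat),
    [/\ uniq (map fst s),
        (forall theta : {ffun 'I_n -> R},
            theta \in map fst s <-> is_equilibrium (@omega_ex R n q) (@k_ex R n) theta),
        (forall p, p \in s ->
            root_mult (fsigma (@omega_ex R n q) (@k_ex R n) (sign_pattern p.1))
                      (Rval (@k_ex R n) p.1) p.2) &
        ((\sum_(p <- s) p.2)%:Z =
           (2 ^ n)%:Z -
           \sum_(i < (2 * n).+1 |
                   (- q < ((i%:Z - n%:Z)%:~R : R)) && (((i%:Z - n%:Z)%:~R : R) < q))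
              (binomz n ((n./2)%:Z + (i%:Z - n%:Z)))%:Z)%R].
Proof.
exists eqseq; split.
- rewrite /eqseq -map_comp map_inj_in_uniq ?enum_uniq //.
  move=> x y; rewrite !mem_enum !inE => vx vy /= e.
  exact: theta_inj.
- move=> th; split.
    case/mapP => p /mapP [x]; rewrite mem_enum inE => vx -> -> /=.
    exact: theta_equil (valid_le _ vx).
  case/classify => x [vx ->].
  apply/mapP; exists (theta x.1 x.2, mult x.1) => //.
  by apply/mapP; exists x; rewrite ?mem_enum ?inE.
- move=> p /mapP [x]; rewrite mem_enum inE => vx -> /=.
  exact: theta_root (valid_le _ vx).
- by rewrite count1 count2 count4 count3.
Qed.

End Main.

Theorem theorem4 (R : realType) (n : nat) (q : R) :
  (2 <= n)%N -> ~~ odd n -> 0 < q ->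
  exists s : seq ({ffun 'I_n -> R} * nat),
    [/\ uniq (map fst s),
        (forall theta : {ffun 'I_n -> R},
            theta \in map fst s <-> is_equilibrium (@omega_ex R n q) (@k_ex R n) theta),
        (forall p, p \in s ->
            root_mult (fsigma (@omega_ex R n q) (@k_ex R n) (sign_pattern p.1))
                      (Rval (@k_ex R n) p.1) p.2) &
        ((\sum_(p <- s) p.2)%:Z =
           (2 ^ n)%:Z -
           \sum_(i < (2 * n).+1 |
                   (- q < ((i%:Z - n%:Z)%:~R : R)) && (((i%:Z - n%:Z)%:~R : R) < q))
              (binomz n ((n./2)%:Z + (i%:Z - n%:Z)))%:Z)%R].
Proof. by move=> h1 h2 h3; apply: main. Qed.
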